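(* Let $k\ge2$ and $c\in\mathcal{S}_k^\beta\setminus\{\mathbf{0}\}$. Then every element of the ideal $\langle\gamma^{\nu(c)+1}\rangle$ appears exactly $q^{\nu(c)}L_\beta(k-1)$ times among the coordinates of $c$, and the remaining $q^{s(k-1)}$ coordinates of $c$ lie in $\langle\gamma^{\nu(c)}\rangle\setminus\langle\gamma^{\nu(c)+1}\rangle$, where $L_\beta(m)=q^{(s-1)(m-1)}\frac{q^m-1}{q-1}$.
   Context: Let $R$ be a finite commutative chain ring with maximal ideal $\langle\gamma\rangle$, nilpotency index $s$ (so $\langle\gamma^s\rangle=\{0\}$) and residue field $R/\langle\gamma\rangle\cong\mathbb{F}_q$. Fix coset representatives $T=\{e_0,\dots,e_{q-1}\}$ with $e_0=0,e_1=1$, ordered $e_0<\dots<e_{q-1}$; each $r\in R$ is uniquely $\sum_{i=0}^{s-1}r_i\gamma^i$, $r_i\in T$; order $R$ by $x>y$ iff $x_i>y_i$ in $T$ for the largest $i$ with $x_i\neq y_i$; list $R=\{\rho_0,\dots,\rho_{q^s-1}\}$ increasingly. $\mathbf{a}^{(m)}$ is the constant vector of length $m$. Define $G_1^\alpha=(\rho_0\ \cdots\ \rho_{q^s-1})$ and, for $k>1$, $G_k^\alpha$ as the matrix of $q^s$ column blocks, the $j$-th having first row $\boldsymbol{\rho_j}^{(q^{s(k-1)})}$ and $G_{k-1}^\alpha$ below. List $\langle\gamma\rangle$ increasingly as $a_0\gamma<\dots<a_{q^{s-1}-1}\gamma$. Define $G_1^\beta=(1)$ and, for $k>1$, $G_k^\beta$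 as the matrix with column blocks: first a block with first row $\mathbf{1}^{(q^{s(k-1)})}$ and $G_{k-1}^\alpha$ below; then for each $j=0,\dots,q^{s-1}-1$ a block with first row the constant vector with entry $a_j\gamma$ and $G_{k-1}^\beta$ below. $\mathcal{S}_k^\beta$ is the $R$-submodule generated by the rows of $G_k^\beta$ (its length is $L_\beta(k)$). Valuation: for $x\in R\setminus\{0\}$, $\nu(x)$ is the largest $m$ with $x=\gamma^m\beta$, $\beta$ a unit; $\nu(0)=\infty$; for $x\in R^n$, $\nu(x)=\min_i\nu(x_i)$. *)

(* Defs.v *)
From HB Require Import structures.
From mathcomp Require Import all_boot all_order all_algebra.
Set Implicit Arguments. Unset Strict Implicit. Unset Printing Implicit Defensive.
Import Order.TTheory GRing.Theory.
Local Open Scope ring_scope.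

Section ChainRing.
Variable R : finComUnitRingType.
Variable gamma : R.   (* generator of the maximal ideal *)
Variable s : nat.     (* nilpotency index of gamma *)
Variable e : seq R.   (* the ordered coset representatives e_0 < ... < e_{q-1} *)

(* q = |R / <gamma>| = number of coset representatives *)
Definition qq : nat := size e.

Definition inI (m : nat) (x : R) : bool := [exists y : R, x == gamma ^+ m * y].

Definition coset_reps : Prop :=
  (forall r : R, exists2 i, (i < size e)%N & inI 1 (r - e`_i)) /\
  (forall i j, (i < size e)%N -> (j < size e)%N -> inI 1 (e`_i - e`_j) -> i = j).

(* rho_j : the j-th element of R in increasing order.  The order compares the
   gamma-adic digits (in T) from the highest power down, so the j-th element is
   the one whose digit at gamma^i is e_{d_i}, where d_i is the i-th base-q digit
   of j. *)
Definition rho (j : nat) : R :=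
  \sum_(i < s) e`_((j %/ qq ^ i) %% qq) * gamma ^+ i.

(* a_j gamma : the j-th element of <gamma> in increasing order (the elements of
   <gamma> are those whose digit at gamma^0 is e_0 = 0). *)
Definition agamma (j : nat) : R := rho (qq * j).

(* entries (row i, column j, 0-indexed) of G_k^alpha *)
Fixpoint galpha (k i j : nat) : R :=
  match k with
  | 0 => 0
  | k'.+1 => if i is i'.+1 then galpha k' i' (j %% qq ^ (s * k'))
             else rho (j %/ qq ^ (s * k'))
  end.

(* number of columns of G_k^beta *)
Fixpoint nbeta (k : nat) : nat :=
  match k with
  | 0 => 0
  | k'.+1 => (qq ^ (s * k') + qq ^ s.-1 * nbeta k')%N
  end.

(* entries of G_k^beta: first block [1 ; G_{k-1}^alpha], then for each
   j < q^(s-1) the block [a_j gamma ; G_{k-1}^beta]; G_1^beta = (1). *)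
Fixpoint gbeta (k i j : nat) : R :=
  match k with
  | 0 => 0
  | k'.+1 =>
      if (j < qq ^ (s * k'))%N then
        (if i is i'.+1 then galpha k' i' j else 1)
      else
        let j' := (j - qq ^ (s * k'))%N in
        if i is i'.+1 then gbeta k' i' (j' %% nbeta k')
        else agamma (j' %/ nbeta k')
  end.

Definition Galpha (k : nat) : 'M[R]_(k, qq ^ (s * k)) :=
  \matrix_(i < k, j < qq ^ (s * k)) galpha k i j.

Definition Gbeta (k : nat) : 'M[R]_(k, nbeta k) :=
  \matrix_(i < k, j < nbeta k) gbeta k i j.

Definition in_Sbeta (k : nat) (c : 'rV[R]_(nbeta k)) : Prop :=
  exists u : 'rV[R]_k, c = u *m Gbeta k.

(* valuation of a ring element: largest m with x = gamma^m * (unit).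
   (For x <> 0 such m is < s since gamma^s = 0; for x = 0 the value is
   irrelevant here, nu(0) = infinity being handled at the vector level.) *)
Definition nuR (x : R) : nat :=
  \max_(m < s | [exists b : R, (b \is a GRing.unit) && (x == gamma ^+ m * b)]) m.

(* valuation of a vector: minimum of the valuations of its coordinates
   (zero coordinates have valuation infinity and are skipped; the default s
   is only reached for the zero vector). *)
Definition nuv (n : nat) (c : 'rV[R]_n) : nat :=
  \big[minn/s]_(j < n | c ord0 j != 0) nuR (c ord0 j).

End ChainRing.

Definition Lbeta (q s m : nat) : nat :=
  (q ^ (s.-1 * m.-1) * ((q ^ m - 1) %/ (q - 1)))%N.

(* Main.v *)
Require Import Defs.
From HB Require Import structures.
From mathcomp Require Import all_boot all_order all_algebra.
From mathcomp Require Import zify ring.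
Set Warnings "-all".
Import GRing.Theory.
Local Open Scope ring_scope.
Set Implicit Arguments. Unset Strict Implicit.

Section CR.
Variable R : finComUnitRingType.
Variables (gamma : R) (s : nat) (e : seq R).
Hypothesis Hs : (0 < s)%N.
Hypothesis Hnil : gamma ^+ s = 0.
Hypothesis Hnil1 : gamma ^+ s.-1 != 0.
Hypothesis Hmax : forall x : R, x \isn't a GRing.unit -> exists y : R, x = gamma * y.
Hypothesis He : coset_reps gamma e.
Hypothesis He0 : e`_0 = 0.
Hypothesis He1 : e`_1 = 1.

Local Notation q := (size e).
Local Notation inI := (inI gamma).

Lemma gamma_nonunit : gamma \isn't a GRing.unit.
Proof.
apply/negP => gu; have := unitrX s gu; rewrite Hnil.
by rewrite unitr0.
Qed.

Lemma nonunitP x : reflect (exists y, x = gamma * y) (x \isn't a GRing.unit).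
Proof.
apply: (iffP idP); first exact: Hmax.
case=> y ->; rewrite unitrM negb_and; by rewrite gamma_nonunit.
Qed.

Lemma inIP m x : reflect (exists y, x = gamma ^+ m * y) (inI m x).
Proof.
apply: (iffP existsP) => [[y /eqP ->]|[y ->]]; by exists y.
Qed.

Lemma inI1 x : inI 1 x = (x \isn't a GRing.unit).
Proof.
apply/inIP/nonunitP => [[y ->]|[y ->]]; exists y; by rewrite expr1.
Qed.

Lemma inI0 m : inI m 0.
Proof. by apply/inIP; exists 0; rewrite mulr0. Qed.

Lemma inID m x y : inI m x -> inI m y -> inI m (x + y).
Proof. by move=> /inIP[a ->] /inIP[b ->]; apply/inIP; exists (a + b); rewrite mulrDr. Qed.

Lemma inIN m x : inI m x -> inI m (- x).
Proof. by move=> /inIP[a ->]; apply/inIP; exists (- a); rewrite mulrN. Qed.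

Lemma inIB m x y : inI m x -> inI m y -> inI m (x - y).
Proof. by move=> hx hy; apply: inID => //; apply: inIN. Qed.

Lemma inIMr m x y : inI m x -> inI m (x * y).
Proof. by move=> /inIP[a ->]; apply/inIP; exists (a * y); rewrite mulrA. Qed.

Lemma inIMl m x y : inI m y -> inI m (x * y).
Proof. by rewrite mulrC; apply: inIMr. Qed.

Lemma inIX m y : inI m (gamma ^+ m * y).
Proof. by apply/inIP; exists y. Qed.

Lemma inI_le m n x : (m <= n)%N -> inI n x -> inI m x.
Proof.
move=> mn /inIP[a ->]; apply/inIP; exists (gamma ^+ (n - m) * a).
by rewrite mulrA -exprD subnKC.
Qed.

Lemma inI_s x : inI s x -> x = 0.
Proof. by move=> /inIP[a ->]; rewrite Hnil mul0r. Qed.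

Lemma inI_sum m I (r : seq I) (P : pred I) (F : I -> R) :
  (forall i, P i -> inI m (F i)) -> inI m (\sum_(i <- r | P i) F i).
Proof.
move=> h; elim/big_rec: _ => [|i x Pi hx]; first exact: inI0.
by apply: inID => //; apply: h.
Qed.

Lemma unitD_non (u x : R) : u \is a GRing.unit -> x \isn't a GRing.unit ->
  u + x \is a GRing.unit.
Proof.
move=> uu /nonunitP[y ->]; apply/negPn/negP => /nonunitP[z hz].
have : u = gamma * (z - y) by rewrite mulrBr -hz addrK.
by move=> h; move: uu; rewrite h unitrM (negbTE gamma_nonunit).
Qed.

Lemma gammaX_neq0 n : (n < s)%N -> gamma ^+ n != 0.
Proof.
move=> ns; apply: contraNneq Hnil1 => h.
by rewrite -(subnKC (_ : n <= s.-1)%N) ?exprD ?h ?mul0r //; rewrite -ltnS prednK.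
Qed.

Lemma decomp x : x != 0 ->
  exists n b, [/\ (n < s)%N, b \is a GRing.unit & x = gamma ^+ n * b].
Proof.
move=> x0.
suff : forall m, (m <= s)%N -> (exists y, x = gamma ^+ m * y) \/
   exists n b, [/\ (n < m)%N, b \is a GRing.unit & x = gamma ^+ n * b].
  case/(_ s (leqnn s)) => [[y hy]|[n [b [h1 h2 h3]]]].
    by move: x0; rewrite hy Hnil mul0r eqxx.
  by exists n, b.
elim=> [_|m IH ms]; first by left; exists x; rewrite mul1r.
case: (IH (ltnW ms)) => [[y hy]|[n [b [h1 h2 h3]]]]; last first.
  by right; exists n, b; split => //; apply: ltn_trans h1 _.
case: (boolP (y \is a GRing.unit)) => yu.
  by right; exists m, y.
left; case/nonunitP: yu => z hz; exists z.
by rewrite hy hz mulrA -exprSr.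
Qed.

Lemma unit_eq0 n (b : R) : b \is a GRing.unit -> gamma ^+ n * b = 0 -> (s <= n)%N.
Proof.
move=> bu h; rewrite leqNgt; apply/negP => ns.
have : gamma ^+ n = 0 by rewrite -[gamma ^+ n]mulr1 -(mulrV bu) mulrA h mul0r.
by apply/eqP; apply: gammaX_neq0.
Qed.

Lemma ann m d : (m <= s)%N -> gamma ^+ m * d = 0 -> inI (s - m) d.
Proof.
move=> ms h; case: (eqVneq d 0) => [->|d0]; first exact: inI0.
move: h; case: (decomp d0) => n [b [ns bu ->]].
rewrite mulrA -exprD => /(unit_eq0 bu) h.
apply/inIP; exists (gamma ^+ (n - (s - m)) * b).
rewrite mulrA -exprD subnKC //.
lia.
Qed.

Lemma unit_notin m (b : R) : (m < s)%N -> b \is a GRing.unit ->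
  ~~ inI m.+1 (gamma ^+ m * b).
Proof.
move=> ms bu; apply/negP => /inIP[y] h.
have h0 : gamma ^+ m * (b + gamma * (- y)) = 0.
  by rewrite mulrDr h exprSr -mulrA !mulrN subrr.
have hn : gamma * - y \isn't a GRing.unit by apply/nonunitP; exists (- y).
by have := unit_eq0 (unitD_non bu hn) h0; rewrite leqNgt ms.
Qed.


Lemma sum_uniq N (P : nat -> bool) :
  (exists2 n0, (n0 < N)%N & P n0) ->
  (forall a b, (a < N)%N -> (b < N)%N -> P a -> P b -> a = b) ->
  (\sum_(a < N) P a = 1)%N.
Proof.
case=> n0 n0N Pn0 uP.
rewrite (bigD1 (Ordinal n0N)) //= Pn0 big1 // => i /eqP ne.
apply/eqP; rewrite eqb0; apply/negP => Pi; apply: ne; apply: val_inj => /=.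
by apply: uP.
Qed.

Lemma q_gt1 : (1 < q)%N.
Proof.
rewrite ltnNge; apply/negP => hq.
by move: He1; rewrite nth_default // => /eqP; rewrite eq_sym oner_eq0.
Qed.

Lemma q_gt0 : (0 < q)%N.
Proof. exact: ltn_trans q_gt1. Qed.

Definition rhos m n := \sum_(i < m) e`_((n %/ q ^ i) %% q) * gamma ^+ i.

Lemma rhoE n : rho gamma s e n = rhos s n.
Proof. by []. Qed.

Lemma rhosS m n : rhos m.+1 n = e`_(n %% q) + gamma * rhos m (n %/ q).
Proof.
rewrite /rhos big_ord_recl /= expn0 divn1 expr0 mulr1; congr (_ + _).
rewrite mulr_sumr; apply: eq_bigr => i _.
by rewrite /bump /= add1n expnS divnMA exprS mulrCA.
Qed.

Lemma rhos_ex m r : exists2 n, (n < q ^ m)%N & inI m (r - rhos m n).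
Proof.
elim: m r => [|m IH] r.
  by exists 0%N => //; apply/inIP; exists (r - rhos 0 0); rewrite expr0 mul1r.
case: He => /(_ r)[i ilt /inIP[y hy]] _; rewrite expr1 in hy.
case: (IH y) => n nlt /inIP[z hz].
exists (i + q * n)%N.
  rewrite expnS; apply: (@leq_trans (q * n.+1)).
    by rewrite mulnS ltn_add2r.
  by rewrite leq_mul2l nlt orbT.
apply/inIP; exists z.
have hq := q_gt0.
rewrite rhosS addnC mulnC modnMDl modn_small // divnMDl // divn_small // addn0.
by rewrite opprD addrA hy -mulrBr hz mulrA -exprS.
Qed.

Lemma rhos_uniq m n n' : (m <= s)%N -> (n < q ^ m)%N -> (n' < q ^ m)%N ->
  inI m (rhos m n - rhos m n') -> n = n'.
Proof.
elim: m n n' => [|m IH] n n' ms.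
  by rewrite expn0 !ltnS !leqn0 => /eqP -> /eqP ->.
have hq := q_gt0.
move=> nlt n'lt; rewrite !rhosS => /inIP[z hz].
have ab : (n %% q)%N = (n' %% q)%N.
  apply: (proj2 He); rewrite ?ltn_pmod //.
  apply/inIP; exists (gamma ^+ m * z - rhos m (n %/ q) + rhos m (n' %/ q)).
  rewrite expr1 mulrDr mulrBr mulrA -exprS -hz; ring.
have h0 : gamma ^+ 1 * (rhos m (n %/ q) - rhos m (n' %/ q) - gamma ^+ m * z) = 0.
  rewrite expr1 mulrBr mulrBr mulrA -exprS -hz ab; ring.
have := @ann 1 _ Hs h0.
move=> /(inI_le (_ : (m <= s - 1)%N)) h1.
have h2 : inI m (rhos m (n %/ q) - rhos m (n' %/ q)).
  have -> : rhos m (n %/ q) - rhos m (n' %/ q) =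
    (rhos m (n %/ q) - rhos m (n' %/ q) - gamma ^+ m * z) + gamma ^+ m * z by ring.
  by apply: inID; [apply: h1; lia | apply: inIX].
have := IH _ _ (ltnW ms) _ _ h2.
rewrite !ltn_divLR // -!expnSr => /(_ nlt n'lt) hd.
by rewrite (divn_eq n q) (divn_eq n' q) hd ab.
Qed.

Lemma rho_sum r : (\sum_(a < q ^ s) (rho gamma s e a == r) = 1)%N.
Proof.
apply: (@sum_uniq _ (fun a => rho gamma s e a == r)).
  case: (rhos_ex s r) => n nlt /inI_s h; exists n => //.
  by rewrite rhoE; apply/eqP; rewrite -[r](subrK (rhos s n)) h add0r.
move=> a b alt blt /eqP ha /eqP hb; apply: (rhos_uniq (leqnn s)) => //.
by rewrite -!rhoE ha hb subrr inI0.
Qed.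

Lemma agammaE a : agamma gamma s e a = gamma * rhos s.-1 a.
Proof.
rewrite /agamma rhoE -(prednK Hs) rhosS /= modnMr He0 add0r.
by rewrite /qq mulKn // q_gt0.
Qed.

Lemma agamma_in a : inI 1 (agamma gamma s e a).
Proof. by rewrite agammaE; apply/inIP; exists (rhos s.-1 a); rewrite expr1. Qed.

Lemma agamma_sum z : inI 1 z ->
  (\sum_(a < q ^ s.-1) (agamma gamma s e a == z) = 1)%N.
Proof.
move=> /inIP[y]; rewrite expr1 => ->.
apply: (@sum_uniq _ (fun a => agamma gamma s e a == gamma * y)).
  case: (rhos_ex s.-1 y) => n nlt /inIP[w hw]; exists n => //.
  rewrite agammaE; apply/eqP.
  apply/eqP; rewrite -subr_eq0 -mulrBr -opprB hw mulrN mulrA -exprS prednK // Hnil mul0r.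
  by rewrite oppr0.
move=> a b alt blt /eqP ha /eqP hb.
apply: (rhos_uniq (leq_pred s)) => //.
have h0 : gamma ^+ 1 * (rhos s.-1 a - rhos s.-1 b) = 0.
  by rewrite expr1 mulrBr -!agammaE ha hb subrr.
by have := @ann 1 _ Hs h0; rewrite subn1.
Qed.


Lemma eq_addl (a b t : R) : (a + b == t) = (b == t - a).
Proof.
by apply/eqP/eqP => h; [rewrite -h (addrC a b) addrK | rewrite h (addrC a) subrK].
Qed.

Lemma eq_solve (u0 r X t : R) : u0 \is a GRing.unit ->
  (u0 * r + X == t) = (r == u0^-1 * (t - X)).
Proof.
move=> uu; rewrite addrC eq_addl.
apply/eqP/eqP => h; first by rewrite -h mulrA mulVr // mul1r.
by rewrite h mulrA mulrV // mul1r.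
Qed.

Lemma sum_mul N M (F : nat -> nat) :
  (\sum_(j < N * M) F j = \sum_(a < N) \sum_(b < M) F (a * M + b))%N.
Proof.
elim: N => [|N IH]; first by rewrite mul0n !big_ord0.
rewrite big_ord_recr /= -IH mulSnr big_split_ord /=.
by congr (_ + _)%N.
Qed.

Lemma sum_const1 N : (\sum_(j < N) 1 = N)%N.
Proof. by rewrite sum_nat_const card_ord muln1. Qed.

Lemma sum_constn N c : (\sum_(j < N) c = N * c)%N.
Proof. by rewrite sum_nat_const card_ord. Qed.

Definition colA k (u : nat -> R) j := \sum_(i < k) u i * galpha gamma s e k i j.
Definition colB k (u : nat -> R) j := \sum_(i < k) u i * gbeta gamma s e k i j.

Lemma colAS k u j : colA k.+1 u j =
  u 0%N * rho gamma s e (j %/ q ^ (s * k)) + colA k (fun i => u i.+1) (j %% q ^ (s * k)).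
Proof. by rewrite /colA big_ord_recl. Qed.

Lemma colBS k u j : colB k.+1 u j =
  if (j < q ^ (s * k))%N then u 0%N + colA k (fun i => u i.+1) j
  else u 0%N * agamma gamma s e ((j - q ^ (s * k)) %/ nbeta s e k)
       + colB k (fun i => u i.+1) ((j - q ^ (s * k)) %% nbeta s e k).
Proof.
rewrite /colB big_ord_recl /=.
by case: ifP => _; rewrite ?mulr1.
Qed.

Definition CntA k u t := (\sum_(j < q ^ (s * k)) (colA k u j == t))%N.
Definition CntB k u t := (\sum_(j < nbeta s e k) (colB k u j == t))%N.

Lemma CntA_unit k u t : (exists2 i, (i < k)%N & u i \is a GRing.unit) ->
  CntA k u t = (q ^ (s * k.-1))%N.
Proof.
elim: k u t => [|k IH] u t; first by case.
case=> i ik ui.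
have Qp : (0 < q ^ (s * k))%N by rewrite expn_gt0 q_gt0.
rewrite /CntA mulnS expnD (sum_mul _ _ (fun j => colA k.+1 u j == t)).
under eq_bigr => a _ do under eq_bigr => b _ do
  rewrite colAS divnMDl // modnMDl divn_small // addn0 modn_small //.
case: (boolP (u 0%N \is a GRing.unit)) => u0.
  rewrite exchange_big /= -[in RHS](sum_const1 (q ^ (s * k))).
  apply: eq_bigr => b _.
  under eq_bigr => a _ do rewrite eq_solve //.
  exact: rho_sum.
case: i ik ui => [|i] ik ui; first by rewrite ui in u0.
have k0 : (0 < k)%N by case: k {IH Qp} ik.
under eq_bigr => a _ do under eq_bigr => b _ do rewrite eq_addl.
transitivity (\sum_(a < q ^ s) CntA k (fun i => u i.+1) (t - u 0%N * rho gamma s e a)%R)%N.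
  by [].
have hex : exists2 i0, (i0 < k)%N & u i0.+1 \is a GRing.unit by exists i.
under eq_bigr => a _ do rewrite (IH (fun i => u i.+1) _ hex).
by rewrite sum_constn -expnD -mulnS prednK.
Qed.


Lemma colA_in m k u j : (forall i, (i < k)%N -> inI m (u i)) -> inI m (colA k u j).
Proof. by move=> h; apply: inI_sum => i _; apply: inIMr; apply: h. Qed.

Lemma colB_in m k u j : (forall i, (i < k)%N -> inI m (u i)) -> inI m (colB k u j).
Proof. by move=> h; apply: inI_sum => i _; apply: inIMr; apply: h. Qed.

Lemma nbetaS k : nbeta s e k.+1 = (q ^ (s * k) + q ^ s.-1 * nbeta s e k)%N.
Proof. by []. Qed.

Lemma CntB_unit k u t : (exists2 i, (i < k.+1)%N & u i \is a GRing.unit) ->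
  inI 1 t -> CntB k.+1 u t = nbeta s e k.
Proof.
rewrite inI1 => hu ht.
elim: k u t hu ht => [|k IH] u t hu ht.
  rewrite /CntB nbetaS muln0 expn0 muln0 addn0 big_ord1 /colB big_ord1 /=.
  rewrite muln0 expn0 /= mulr1.
  case: hu => i; rewrite ltnS leqn0 => /eqP -> u0.
  by apply/eqP; rewrite eqb0; apply/negP => /eqP h; move: ht; rewrite -h u0.
have Qp : (0 < q ^ (s * k.+1))%N by rewrite expn_gt0 q_gt0.
rewrite /CntB nbetaS big_split_ord.
rewrite (sum_mul _ _ (fun j => colB k.+2 u (q ^ (s * k.+1) + j) == t)).
transitivity (\sum_(j < q ^ (s * k.+1)) (u 0%N + colA k.+1 (fun i => u i.+1) j == t)%R +
   \sum_(a < q ^ s.-1) \sum_(b < nbeta s e k.+1)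
     (u 0%N * agamma gamma s e a + colB k.+1 (fun i => u i.+1) b == t)%R)%N.
  congr (_ + _)%N.
    by apply: eq_bigr => j _; rewrite /= colBS ltn_ord.
  apply: eq_bigr => a _; apply: eq_bigr => b _.
  have nbp : (0 < nbeta s e k.+1)%N by apply: leq_ltn_trans (ltn_ord b).
  rewrite colBS ltnNge leq_addr /= addKn divnMDl //.
  by rewrite modnMDl divn_small // addn0 modn_small.
case: (boolP [exists i : 'I_k.+1, u i.+1 \is a GRing.unit]) => [/existsP[i ui]|nu].
  have hex : exists2 i0, (i0 < k.+1)%N & u i0.+1 \is a GRing.unit by exists i.
  under eq_bigr => j _ do rewrite eq_addl.
  transitivity (CntA k.+1 (fun i => u i.+1) (t - u 0%N)%R +
     \sum_(a < q ^ s.-1) CntB k.+1 (fun i => u i.+1) (t - u 0%N * agamma gamma s e a)%R)%N.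
    congr (_ + _)%N; apply: eq_bigr => a _; apply: eq_bigr => b _; by rewrite eq_addl.
  rewrite (CntA_unit _ hex) /=.
  have hnt : forall a, (t - u 0%N * agamma gamma s e a)%R \isn't a GRing.unit.
    move=> a; have : inI 1 (t - u 0%N * agamma gamma s e a)%R.
      by apply: inIB; [rewrite inI1 | apply: inIMl; exact: agamma_in].
    by rewrite inI1.
  under eq_bigr => a _ do rewrite (IH (fun i => u i.+1) _ hex (hnt a)).
  by rewrite sum_constn.
have nui : forall i, (i < k.+1)%N -> inI 1 (u i.+1).
  move=> i ik; rewrite inI1; apply/negP => ui; move/existsP: nu; apply.
  by exists (Ordinal ik).
have u0 : u 0%N \is a GRing.unit.
  case: hu => [[|i]] // ik ui; by move: (nui i ik); rewrite inI1 ui.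
rewrite big1 ?add0n; last first.
  move=> j _; apply/eqP; rewrite eqb0; apply/negP => /eqP h.
  have hc : colA k.+1 (fun i => u i.+1) j \isn't a GRing.unit.
    by rewrite -inI1; exact: colA_in.
  by move: (unitD_non u0 hc); rewrite h (negbTE ht).
rewrite exchange_big -[in RHS](sum_const1 (nbeta s e k.+1)).
apply: eq_bigr => b _.
under eq_bigr => a _ do rewrite eq_solve //.
apply: agamma_sum; apply: inIMl; apply: inIB; first by rewrite inI1.
exact: colB_in.
Qed.


Lemma card_sum n (P : pred 'I_n) : #|[set j | P j]| = (\sum_(j < n) P j)%N.
Proof.
rewrite cardsE -sum1_card big_mkcond /=; apply: eq_bigr => j _.
by rewrite unfold_in; case: (P j).
Qed.

Lemma val_uniq n m b b' : (n < s)%N -> (m < s)%N -> b \is a GRing.unit ->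
  b' \is a GRing.unit -> gamma ^+ n * b = gamma ^+ m * b' -> n = m.
Proof.
wlog nm : n m b b' / (n <= m)%N.
  move=> H ns ms bu bu' h; case: (leqP n m) => [nm|/ltnW mn]; first exact: H h.
  by apply/esym; apply: H (esym h).
move=> ns ms bu bu' h; apply/eqP; rewrite eqn_leq nm /=; rewrite leqNgt.
apply/negP => nm'.
have := unit_notin ns bu; rewrite h.
by rewrite (inI_le nm') ?inIX.
Qed.

Lemma nuR_eq n b : (n < s)%N -> b \is a GRing.unit -> nuR gamma s (gamma ^+ n * b) = n.
Proof.
move=> ns bu; apply/eqP; rewrite eqn_leq; apply/andP; split.
  apply/bigmax_leqP => m /existsP[b' /andP[bu' /eqP h]].
  by rewrite (val_uniq (ltn_ord m) ns bu' bu (esym h)).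
have := @leq_bigmax_cond _ (fun m : 'I_s => [exists b0, (b0 \is a GRing.unit) && (gamma ^+ n * b == gamma ^+ m * b0)]) (fun m => nat_of_ord m) (Ordinal ns).
by apply; apply/existsP; exists b; rewrite bu eqxx.
Qed.

Lemma agamma_count z : (\sum_(a < q ^ s.-1) (agamma gamma s e a == z))%N = (z \isn't a GRing.unit).
Proof.
case: (boolP (z \is a GRing.unit)) => zu /=.
  apply: big1 => a _; apply/eqP; rewrite eqb0; apply/negP => /eqP h.
  by move: (agamma_in a); rewrite h inI1 zu.
by apply: agamma_sum; rewrite inI1.
Qed.

Lemma Lbeta_nbeta m : (0 < m)%N -> nbeta s e m = Lbeta q s m.
Proof.
case: m => // m _.
have h : nbeta s e m.+1 = (q ^ (s.-1 * m) * \sum_(i < m.+1) q ^ i)%N.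
  elim: m => [|m IH].
    by rewrite nbetaS muln0 expn0 !muln0 big_ord1 expn0.
  rewrite nbetaS IH [in RHS]big_ord_recr /=.
  have e1 : (s.-1 + s.-1 * m = s.-1 * m.+1)%N by rewrite mulnS.
  have e2 : (s.-1 * m.+1 + m.+1 = s * m.+1)%N by rewrite -{2}(prednK Hs) mulSn addnC.
  by rewrite mulnA -expnD e1 mulnDr -expnD e2 addnC.
rewrite h /Lbeta /=; congr (_ * _)%N.
by rewrite subn1 predn_exp subn1 mulKn // -ltnS prednK ?q_gt1 ?q_gt0.
Qed.


Lemma fiber w x : (w < s)%N -> inI w.+1 x ->
  exists T : nat -> R, (forall n, inI 1 (T n)) /\
    forall z, (\sum_(n < q ^ w) (z == T n))%N = (gamma ^+ w * z == x).
Proof.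
move=> ws /inIP[y hx].
pose T n := gamma * y + gamma ^+ (s - w) * rhos w n.
have hT : forall n, gamma ^+ w * T n = x.
  move=> n; rewrite /T mulrDr mulrA -exprSr -hx mulrA -exprD subnKC ?(ltnW ws) //.
  by rewrite Hnil mul0r addr0.
exists T; split.
  move=> n; apply: inID; first by apply/inIP; exists y; rewrite expr1.
  apply: inIMr; apply: (inI_le (_ : 1 <= s - w)%N); first by rewrite subn_gt0.
  by apply/inIP; exists 1; rewrite mulr1.
move=> z; case: (boolP (gamma ^+ w * z == x)) => [/eqP hz|hz].
  apply: (@sum_uniq _ (fun n => z == T n)).
    have h0 : gamma ^+ w * (z - gamma * y) = 0.
      by rewrite mulrBr hz mulrA -exprSr hx subrr.
    case/inIP: (ann (ltnW ws) h0) => y' hy'.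
    case: (rhos_ex w y') => n nlt /inIP[y2 hy2]; exists n => //.
    apply/eqP; rewrite /T.
    have : z = gamma * y + gamma ^+ (s - w) * y' by rewrite -hy' addrC subrK.
    move=> ->; congr (_ + _).
    have : gamma ^+ (s - w) * (y' - rhos w n) = 0.
      by rewrite hy2 mulrA -exprD subnK ?(ltnW ws) // Hnil mul0r.
    by move/eqP; rewrite mulrBr subr_eq0 => /eqP.
  move=> a b alt blt /eqP ha /eqP hb.
  apply: (rhos_uniq (ltnW ws)) => //.
  have h0 : gamma ^+ (s - w) * (rhos w a - rhos w b) = 0.
    apply/eqP; rewrite mulrBr subr_eq0; apply/eqP.
    by move: ha; rewrite hb /T => /addrI.
  by have := ann (leq_subr w s) h0; rewrite subKn ?(ltnW ws).
apply: big1 => n _; apply/eqP; rewrite eqb0; apply/negP => /eqP h.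
by move: hz; rewrite h hT eqxx.
Qed.


Lemma bigmin_le (I : eqType) (r : seq I) (x0 : nat) (P : pred I) (F : I -> nat) j :
  j \in r -> P j -> (\big[minn/x0]_(i <- r | P i) F i <= F j)%N.
Proof.
elim: r => // a r IH; rewrite inE big_cons => /orP[/eqP <-|jr] Pj.
  by rewrite Pj geq_minl.
case: (P a); last exact: IH.
by rewrite (leq_trans (geq_minr _ _)) ?IH.
Qed.

Lemma main_sec k (c : 'rV[R]_(nbeta s e k)) (Hk : (2 <= k)%N)
  (Hc : @in_Sbeta R gamma s e k c) (Hc0 : c != 0) :
  let v := nuv gamma s c in
  (forall x : R, inI v.+1 x ->
     #|[set j | c ord0 j == x]| = (size e ^ v * Lbeta (size e) s k.-1)%N)
  /\ #|[set j | ~~ inI v.+1 (c ord0 j)]| = (size e ^ (s * k.-1))%N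
  /\ (forall j, ~~ inI v.+1 (c ord0 j) -> inI v (c ord0 j)).
Proof.
case: Hc => u hc.
case: k c u hc Hc0 Hk => [|k] // c u hc Hc0 Hk.
pose U i := u ord0 (inord i).
have cE : forall j, c ord0 j = colB k.+1 U j.
  move=> j; rewrite hc mxE /colB; apply: eq_bigr => i _.
  by rewrite /Gbeta mxE /U inord_val.
pose P m := (m <= s)%N && [forall i : 'I_k.+1, inI m (U i)].
have exP : exists m, P m.
  exists 0%N; rewrite /P leq0n; apply/forallP => i; apply/inIP; exists (U i).
  by rewrite expr0 mul1r.
have ubP : forall m, P m -> (m <= s)%N by move=> m /andP[].
case: (ex_maxnP exP ubP) => w /andP[ws /forallP Uw] wmax.
have ws' : (w < s)%N.
  rewrite ltn_neqAle ws andbT; apply/eqP => wE; move/negP: Hc0; apply.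
  apply/eqP/rowP => j; rewrite cE mxE /colB big1 // => i _.
  by have := Uw i; rewrite wE => /inI_s ->; rewrite mul0r.
have [i0 Ui0] : exists i0 : 'I_k.+1, ~~ inI w.+1 (U i0).
  apply/existsP; apply: contraT; rewrite negb_exists => /forallP h.
  have : P w.+1.
    by rewrite /P ws'; apply/forallP => i; have := h i; rewrite negbK.
  by move/wmax; rewrite ltnn.
pose U' i := odflt 0 [pick y | U i == gamma ^+ w * y].
have UE : forall i : 'I_k.+1, U i = gamma ^+ w * U' i.
  move=> i; rewrite /U'; case: pickP => [y /eqP //|h].
  by move: (Uw i) => /inIP[y hy]; move: (h y); rewrite hy eqxx.
have U'u : U' i0 \is a GRing.unit.
  apply/negPn/negP => /nonunitP[y hy]; move: Ui0.
  by rewrite UE hy mulrA -exprSr inIX.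
have hex : exists2 i, (i < k.+1)%N & U' i \is a GRing.unit by exists i0.
have cE' : forall j, c ord0 j = gamma ^+ w * colB k.+1 U' j.
  by move=> j; rewrite cE /colB mulr_sumr; apply: eq_bigr => i _; rewrite UE mulrA.
pose c' j := colB k.+1 U' j.
have Hunits : (\sum_(j < nbeta s e k.+1) (c' j \is a GRing.unit) = q ^ (s * k))%N.
  have h1 : (\sum_(j < nbeta s e k.+1) (c' j \is a GRing.unit) +
             \sum_(j < nbeta s e k.+1) (c' j \isn't a GRing.unit) = nbeta s e k.+1)%N.
    rewrite -big_split /= -[RHS]sum_const1; apply: eq_bigr => j _.
    by rewrite addnC addn_negb.
  have h2 : (\sum_(j < nbeta s e k.+1) (c' j \isn't a GRing.unit) = q ^ s.-1 * nbeta s e k)%N.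
    under eq_bigr => j _ do rewrite -agamma_count.
    rewrite exchange_big -[RHS]sum_constn; apply: eq_bigr => a _.
    rewrite -(CntB_unit hex (agamma_in a)) /CntB; apply: eq_bigr => j _.
    by rewrite eq_sym.
  by move: h1; rewrite h2 nbetaS => /addIn.
have [js jsu] : exists js : 'I_(nbeta s e k.+1), c' js \is a GRing.unit.
  apply/existsP; apply: contraT; rewrite negb_exists => /forallP h.
  move: Hunits; rewrite big1 => [/esym/eqP|j _]; last by rewrite (negbTE (h j)).
  by rewrite expn_eq0 andbC; case: (s * k)%N => //= _; rewrite eqn0Ngt q_gt0.
have vE : nuv gamma s c = w.
  apply/eqP; rewrite eqn_leq; apply/andP; split.
    have cj0 : c ord0 js != 0.
      rewrite cE'; apply/eqP => h; have := unit_eq0 jsu h.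
      by rewrite leqNgt ws'.
    have := @bigmin_le _ _ s (fun j => c ord0 j != 0) (fun j => nuR gamma s (c ord0 j)) _ (mem_index_enum js) cj0.
    by rewrite cE' nuR_eq.
  rewrite /nuv; elim/big_rec: _ => [|j x cj0 hx] //.
  rewrite leq_min hx andbT.
  case: (decomp cj0) => n [b [ns bu hcj]].
  rewrite hcj nuR_eq // leqNgt; apply/negP => nw.
  have := unit_notin ns bu; rewrite -hcj cE'.
  by rewrite (inI_le nw) ?inIX.
move=> v; rewrite /v vE; split; last split.
- move=> x hx; rewrite card_sum.
  case: (fiber ws' hx) => T [T1 HT].
  transitivity (\sum_(j < nbeta s e k.+1) \sum_(n < q ^ w) (c' j == T n))%N.
    by apply: eq_bigr => j _; rewrite HT cE'.
  rewrite exchange_big.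
  transitivity (\sum_(n < q ^ w) nbeta s e k)%N.
    by apply: eq_bigr => n _; rewrite -(CntB_unit hex (T1 n)).
  by rewrite sum_constn Lbeta_nbeta.
- rewrite card_sum.
  transitivity (\sum_(j < nbeta s e k.+1) (c' j \is a GRing.unit))%N; last exact: Hunits.
  apply: eq_bigr => j _.
  congr nat_of_bool; rewrite cE'; apply/idP/idP.
    apply: contraR => /nonunitP[y hy]; rewrite /c' in hy.
    by rewrite hy mulrA -exprSr inIX.
  exact: unit_notin.
- by move=> j _; rewrite cE' inIX.
Qed.

End CR.

Unset Implicit Arguments.
Set Strict Implicit.

Theorem proposition3p20 (R : finComUnitRingType) (gamma : R) (s : nat) (e : seq R)
  (Hs : (0 < s)%N)
  (Hnil : gamma ^+ s = 0) (Hnil1 : gamma ^+ s.-1 != 0)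
  (Hmax : forall x : R, x \isn't a GRing.unit -> exists y : R, x = gamma * y)
  (He : coset_reps gamma e) (He0 : e`_0 = 0) (He1 : e`_1 = 1)
  (k : nat) (Hk : (2 <= k)%N)
  (c : 'rV[R]_(nbeta s e k)) (Hc : @in_Sbeta R gamma s e k c) (Hc0 : c != 0) :
  let v := nuv gamma s c in
  (forall x : R, inI gamma v.+1 x ->
     #|[set j | c ord0 j == x]| = (size e ^ v * Lbeta (size e) s k.-1)%N)
  /\ #|[set j | ~~ inI gamma v.+1 (c ord0 j)]| = (size e ^ (s * k.-1))%N
  /\ (forall j, ~~ inI gamma v.+1 (c ord0 j) -> inI gamma v (c ord0 j)).
Proof.
by apply: main_sec.
Qed.
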